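(* Let $|\Pi|=n>2$, let $\mathcal{G}$ be a rooted communication graph on $\Pi$ with $\operatorname{Root}(\mathcal{G})=R$, let $\mathcal{G}'$ be a rooted communication graph on $\Pi$ with $\operatorname{Root}(\mathcal{G}')=R'$, and let $R''\subseteq \Pi$ be nonempty with $R''\neq R$ and $R''\neq R'$. Then there is a sequence of communication graphs $\mathcal{G}=\mathcal{G}_1,\mathcal{G}_2,\dots,\mathcal{G}_k=\mathcal{G}'$ such that each $\mathcal{G}_i$ is rooted, $\operatorname{Root}(\mathcal{G}_i)\neq R''$, and for $1\le i<k$ the graphs $\mathcal{G}_i$ and $\mathcal{G}_{i+1}$ differ in exactly one edge.
   Context: A communication graph on $\Pi$ is a directed graph with vertex set $\Pi$ containing every self-loop. A root component of a graph $\mathcal{G}$ is a nonempty set $R\subseteq\Pi$ that is the vertex set of a strongly connected component of $\mathcal{G}$ such that no edge $(p\to q)$ with $q\in R$, $p\notin R$ exists. A graph is rooted if it has exactly one root component, denoted $\operatorname{Root}(\mathcal{G})$. *)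

(* Defs.v *)
From mathcomp Require Import all_boot.
Set Implicit Arguments. Unset Strict Implicit. Unset Printing Implicit Defensive.

(* A directed graph on the finite process set Pi is given by its edge set
   E : {set Pi * Pi}; (p, q) \in E means the edge p -> q. *)
Section Defs.
Variable Pi : finType.

Definition edge_rel (E : {set Pi * Pi}) : rel Pi := fun p q => (p, q) \in E.

Definition comm_graph (E : {set Pi * Pi}) : Prop := forall p : Pi, (p, p) \in E.

Definition is_scc (E : {set Pi * Pi}) (R : {set Pi}) : Prop :=
  R != set0 /\
  (forall x y, x \in R -> y \in R -> connect (edge_rel E) x y) /\
  (forall x y, x \in R -> connect (edge_rel E) x y -> connect (edge_rel E) y x -> y \in R).

Definition is_root_comp (E : {set Pi * Pi}) (R : {set Pi}) : Prop :=
  is_scc E R /\ (forall p q, (p, q) \in E -> q \in R -> p \in R).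

Definition rooted_with (E : {set Pi * Pi}) (R : {set Pi}) : Prop :=
  is_root_comp E R /\ (forall R', is_root_comp E R' -> R' = R).

Definition differ_one_edge (E1 E2 : {set Pi * Pi}) : Prop :=
  #|(E1 :\: E2) :|: (E2 :\: E1)| = 1.
End Defs.

(* Main.v *)
From Stdlib Require Import Relation_Operators Operators_Properties.
Require Import Defs.
From mathcomp Require Import all_boot.
Set Implicit Arguments. Unset Strict Implicit. Unset Printing Implicit Defensive.

Section S.
Variable Pi : finType.
Implicit Types (E F H : {set Pi * Pi}) (S : {set Pi}).

Definition reach E := [set v | [forall w, connect (edge_rel E) v w]].

Lemma connect_mono E F x y : E \subset F ->
  connect (edge_rel E) x y -> connect (edge_rel F) x y.
Proof.
move=> sEF; apply: connect_sub => u v huv; apply: connect1.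
exact: (subsetP sEF).
Qed.

Lemma closed_connect E S x y :
  (forall p q, (p, q) \in E -> q \in S -> p \in S) ->
  connect (edge_rel E) x y -> y \in S -> x \in S.
Proof.
move=> cl /connectP[p ep ->]; elim: p x ep => //= z p IH x /andP[exz ep] hl.
exact: cl exz (IH _ ep hl).
Qed.

Lemma exists_root E w : exists C, is_root_comp E C /\
  exists2 c, c \in C & connect (edge_rel E) c w.
Proof.
set e := edge_rel E.
pose anc x := [set y | connect e y x].
have P0 : connect e w w by exact: connect0.
case: (@arg_minnP _ w (fun a => connect e a w) (fun a => #|anc a|) P0) => a aw amin.
exists [set x | connect e x a && connect e a x]; split; last first.
  by exists a => //; rewrite inE connect0.
split; last first.
  move=> p q pq; rewrite !inE => /andP[qa aq].
  have pa : connect e p a by apply: connect_trans qa; exact: connect1.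
  rewrite pa /=.
  have sub : anc p \subset anc a.
    by apply/subsetP => y; rewrite !inE => yp; exact: connect_trans yp pa.
  have := amin p (connect_trans pa aw).
  move/(conj sub)/andP; rewrite -eqEcard => /eqP ea.
  have : a \in anc a by rewrite inE connect0.
  by rewrite -ea inE.
split; first by apply/set0Pn; exists a; rewrite inE connect0.
split.
  move=> x y; rewrite !inE => /andP[xa _] /andP[_ ay]; exact: connect_trans xa ay.
move=> x y; rewrite !inE => /andP[xa ax] xy yx.
by rewrite (connect_trans yx xa) (connect_trans ax xy).
Qed.

Lemma rooted_reach E R : rooted_with E R -> R = reach E /\ reach E != set0.
Proof.
move=> [[[R0 [Rc Rcl]] Rin] Runi].
have RS : R \subset reach E.
  apply/subsetP => r rR; rewrite inE; apply/forallP => w.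
  have [C [CR [c cC cw]]] := exists_root E w.
  have eC := Runi _ CR; rewrite eC in cC.
  exact: connect_trans (Rc _ _ rR cC) cw.
have SR : reach E \subset R.
  apply/subsetP => v; rewrite inE => /forallP vall.
  have [r rR] := set0Pn _ R0.
  have := subsetP RS r rR; rewrite inE => /forallP rall.
  exact: Rcl r v rR (rall v) (vall r).
have eR : R = reach E by apply/eqP; rewrite eqEsubset RS SR.
by split=> //; rewrite -eR.
Qed.

Lemma reach_rooted E : reach E != set0 -> rooted_with E (reach E).
Proof.
move=> R0.
have allc v w : v \in reach E -> connect (edge_rel E) v w.
  by rewrite inE => /forallP.
have rc : is_root_comp E (reach E).
  split; last first.
    move=> p q pq qR; rewrite inE; apply/forallP => w.
    apply: connect_trans (allc _ _ qR); exact: connect1.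
  split=> //; split; first by move=> x y xR _; exact: allc.
  move=> x y xR _ yx; rewrite inE; apply/forallP => w.
  exact: connect_trans yx (allc _ _ xR).
split=> // C [[C0 [Cc Ccl]] Cin].
have [r rR] := set0Pn _ R0.
have [x xC] := set0Pn _ C0.
have rC : r \in C by apply: closed_connect Cin (allc _ x rR) xC.
apply/eqP; rewrite eqEsubset; apply/andP; split; apply/subsetP => y.
  move=> yC; rewrite inE; apply/forallP => w.
  exact: connect_trans (Cc _ _ yC rC) (allc _ _ rR).
move=> yR; exact: Ccl r y rC (allc _ _ rR) (allc _ _ yR).
Qed.

Section Paths.
Variable R'' : {set Pi}.
Definition good E := comm_graph E /\ reach E != set0 /\ reach E != R''.
Definition T E1 E2 := good E1 /\ good E2 /\ differ_one_edge E1 E2.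
Definition gpath := clos_refl_sym_trans _ T.

Lemma differ_add E e : e \notin E -> differ_one_edge E (e |: E).
Proof.
move=> eE; rewrite /differ_one_edge.
have -> : (E :\: (e |: E)) :|: ((e |: E) :\: E) = [set e].
  apply/setP => x; rewrite !inE; case: (x =P e) => [->|_]; rewrite ?eE //=.
  by case: (x \in E).
exact: cards1.
Qed.

Lemma mono_path E F : E \subset F ->
  (forall H, E \subset H -> H \subset F -> good H) -> gpath E F.
Proof.
move eqn : #|F :\: E| => n; elim: n E eqn => [|n IH] E eqn sEF hg.
  have -> : E = F.
    apply/eqP; rewrite eqEsubset sEF /=; apply/subsetP => x xF.
    apply/negPn/negP => xE.
    have xFE : x \in F :\: E by rewrite inE xE.
    have : 0 < #|F :\: E| by apply/card_gt0P; exists x.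
    by rewrite eqn.
  exact: rst_refl.
have [e eFE] : exists e, e \in F :\: E by apply/card_gt0P; rewrite eqn.
move: (eFE); rewrite inE => /andP[eE eF].
apply: rst_trans (IH (e |: E) _ _ _).
- apply: rst_step; split; first exact: hg.
  split; last exact: differ_add.
  by apply: hg; rewrite ?subsetUr // subUset sub1set eF.
- have : #|F :\: E| = (#|F :\: (e |: E)|).+1.
    have -> : F :\: (e |: E) = (F :\: E) :\ e.
      by apply/setP => x; rewrite !inE negb_or andbA andbC.
    by rewrite [LHS](cardsD1 e) eFE add1n.
  by rewrite eqn => -[].
- by rewrite subUset sub1set eF.
- by move=> H sH HF; apply: hg => //; apply: subset_trans sH; exact: subsetUr.
Qed.

Lemma bridge E F : gpath (E :&: F) E -> gpath (E :&: F) F -> gpath E F.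
Proof. by move=> h1 h2; apply: rst_trans (rst_sym _ _ _ _ h1) h2. Qed.

Lemma path_seq E F : gpath E F -> good E ->
  exists (k : nat) (Gs : nat -> {set Pi * Pi}),
    [/\ 0 < k, Gs 0 = E, Gs k.-1 = F,
        (forall i, i < k -> good (Gs i))
      & (forall i, i.+1 < k -> differ_one_edge (Gs i) (Gs i.+1))].
Proof.
move=> h; have {h} := clos_rst_rst1n _ _ _ _ h; elim => [x|x y z hxy _ IH] gx.
  by exists 1, (fun _ => x); split=> // -[].
have [gy dxy] : good y /\ differ_one_edge x y.
  case: hxy => [[_ [? ?]]|[? [_ d]]]; split => //.
  by rewrite /differ_one_edge setUC.
have [k [Gs [k0 G0 Gk Gg Gd]]] := IH gy.
exists k.+1, (fun i => if i is j.+1 then Gs j else x); split => //.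
- by case: k k0 Gk {Gg Gd}.
- by case=> // i /Gg.
- by case=> [|i] /= hi; [rewrite G0|apply: Gd].
Qed.
End Paths.

Lemma reach_mono E F : E \subset F -> reach E \subset reach F.
Proof.
move=> sEF; apply/subsetP => v; rewrite !inE => /forallP h.
by apply/forallP => w; apply: connect_mono sEF (h w).
Qed.

Lemma case1 R'' G : good R'' G -> R'' != setT -> gpath R'' G setT.
Proof.
move=> [cG [R0 RR]] nT.
have [r rR] := set0Pn _ R0.
have [u uR] : exists u, u \notin R''.
  apply/existsP; apply: contra_neqT nT => /existsPn h.
  by apply/setP => x; rewrite inE; apply/negPn/h.
have gH H : G \subset H -> (u, r) \in H -> good R'' H.
  move=> sGH urH.
  have rH := subsetP (reach_mono sGH) r rR.
  split; first by move=> p; apply: (subsetP sGH).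
  split; first by apply/set0Pn; exists r.
  have : u \in reach H.
    rewrite inE; apply/forallP => w; apply: connect_trans (connect1 urH) _.
    by move: rH; rewrite inE => /forallP.
  by apply: contraTneq => ->.
apply: rst_trans (_ : gpath R'' G ((u, r) |: G)) _.
  apply: mono_path; first exact: subsetUr.
  move=> H sGH sHF; case urH: ((u, r) \in H); first exact: gH.
  have -> : H = G; last by split.
  apply/eqP; rewrite eqEsubset sGH andbT; apply/subsetP => x xH.
  move: (subsetP sHF x xH); rewrite !inE => /orP[/eqP ex|//].
  by rewrite ex urH in xH.
apply: mono_path; first exact: subsetT.
move=> H sH _; apply: gH; first exact: subset_trans (subsetUr _ _) sH.
by apply: (subsetP sH); rewrite setU11.
Qed.

Definition Star S := [set e : Pi * Pi | (e.2 \notin S) || (e.1 \in S)].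

Lemma good2 H a S w : comm_graph H -> (forall q, connect (edge_rel H) a q) ->
  a \in S -> w \notin S -> H \subset Star S -> good setT H.
Proof.
move=> cH ha aS wS HS.
have aR : a \in reach H by rewrite inE; apply/forallP.
split=> //; split; first by apply/set0Pn; exists a.
apply/negP => /eqP eT.
have : w \in reach H by rewrite eT inE.
rewrite inE => /forallP/(_ a) wa.
have cl : forall p q, (p, q) \in H -> q \in S -> p \in S.
  by move=> p q /(subsetP HS); rewrite inE /= => /orP[/negP|].
by move: wS; rewrite (closed_connect cl wa aS).
Qed.

Lemma star_loop S p : (p, p) \in Star S.
Proof. by rewrite inE /=; case: (p \in S). Qed.

Lemma star_bridge S1 S2 a w1 w2 : a \in S1 -> a \in S2 -> w1 \notin S1 ->
  w2 \notin S2 -> gpath setT (Star S1) (Star S2).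
Proof.
move=> a1 a2 w1S w2S.
have aI q : (a, q) \in Star S1 :&: Star S2 by rewrite !inE a1 a2 !orbT.
have gen S w H : a \in S -> w \notin S ->
    Star S1 :&: Star S2 \subset H -> H \subset Star S -> good setT H.
  move=> aS wS sIH HS; apply: (good2 (a := a) (S := S) (w := w)) => //.
    by move=> p; apply: (subsetP sIH); rewrite in_setI !star_loop.
  by move=> q; apply: connect1; apply: (subsetP sIH).
apply: bridge; apply: mono_path.
- exact: subsetIl.
- by move=> H; apply: gen a1 w1S.
- exact: subsetIr.
- by move=> H; apply: gen a2 w2S.
Qed.

Lemma case2 G c : 2 < #|Pi| -> good setT G -> gpath setT G (Star [set c]).
Proof.
move=> n2 [cG [R0 RT]].
have [a aR] := set0Pn _ R0.
have [w wR] : exists w, w \notin reach G.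
  apply/existsP; apply: contra_neqT RT => /existsPn h.
  by apply/setP => x; rewrite in_setT; move: (h x); rewrite negbK.
have [w2 w2ac] : exists w, w \notin [set a; c].
  apply/existsP; apply: contraT => /existsPn h.
  have : #|Pi| <= #|[set a; c]|.
    by rewrite -cardsT; apply: subset_leq_card; apply/subsetP => x _; apply/negPn/h.
  by rewrite cards2; case: (a != c) => /=; move=> /(leq_trans n2).
have w2c : w2 \notin [set c].
  by move: w2ac; rewrite !inE negb_or => /andP[].
apply: rst_trans (_ : gpath setT G (Star (reach G))) _.
  have sGS : G \subset Star (reach G).
    apply/subsetP => [[p q]] pq; rewrite inE /=.
    case qR: (q \in reach G) => //=.
    rewrite inE; apply/forallP => x; apply: connect_trans (connect1 pq) _.
    by move: qR; rewrite inE => /forallP.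
  apply: mono_path => // H sGH HS.
  apply: (good2 (a := a) (S := reach G) (w := w)) => //.
    by move=> p; apply: (subsetP sGH).
  by move=> q; apply: connect_mono sGH _; move: aR; rewrite inE => /forallP.
apply: rst_trans (star_bridge (a := a) _ _ wR w2ac) _ => //.
  by rewrite !inE eqxx.
apply: (star_bridge (a := c) _ _ w2ac w2c); by rewrite !inE eqxx ?orbT.
Qed.
End S.

Theorem lemma2 (Pi : finType) (G G' : {set Pi * Pi}) (R R' R'' : {set Pi}) :
  2 < #|Pi| ->
  comm_graph G -> rooted_with G R ->
  comm_graph G' -> rooted_with G' R' ->
  R'' != set0 -> R'' != R -> R'' != R' ->
  exists (k : nat) (Gs : nat -> {set Pi * Pi}),
    [/\ 0 < k, Gs 0 = G, Gs k.-1 = G',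
        (forall i, i < k ->
           comm_graph (Gs i) /\ exists Ri, rooted_with (Gs i) Ri /\ Ri != R'')
      & (forall i, i.+1 < k -> differ_one_edge (Gs i) (Gs i.+1))].
Proof.
move=> n2 cG rG cG' rG' _ nR nR'.
have [eR R0] := rooted_reach rG.
have [eR' R0'] := rooted_reach rG'.
have gG : good R'' G by split=> //; split=> //; rewrite -eR eq_sym.
have gG' : good R'' G' by split=> //; split=> //; rewrite -eR' eq_sym.
have p : gpath R'' G G'.
  have [eT|nT] := eqVneq R'' setT.
    subst R''; have [c _] := set0Pn _ R0.
    exact: rst_trans (case2 c n2 gG) (rst_sym _ _ _ _ (case2 c n2 gG')).
  exact: rst_trans (case1 gG nT) (rst_sym _ _ _ _ (case1 gG' nT)).
have [k [Gs [k0 G0 Gk Gg Gd]]] := path_seq p gG.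
exists k, Gs; split=> // i /Gg [ci [Ri0 RiR]]; split=> //.
by exists (reach (Gs i)); split=> //; apply: reach_rooted.
Qed.
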